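(* Let $d\ge1$ and let $T:\mathbb{R}^d\to\mathbb{R}^d$ be the translation $T(x)=x+e_1$, where $e_1=(1,0,\ldots,0)$. Then $T$ does not satisfy the topological shadowing property.
   Context: Let $(X,d)$ be a metric space and $f:X\to X$ a homeomorphism; $\mathcal{C}^+=\{\epsilon:X\to\mathbb{R}^+ : \epsilon \text{ continuous}\}$. For $\delta\in\mathcal{C}^+$, a sequence $\{x_n\}_{n\in\mathbb{Z}}\subset X$ is a $\delta$-pseudo-orbit of $f$ if $d(f(x_n),x_{n+1})<\delta(f(x_n))$ for every $n\in\mathbb{Z}$. For $\epsilon\in\mathcal{C}^+$, the sequence $\{x_n\}$ is $\epsilon$-shadowed by an orbit if there is $y\in X$ with $d(f^n(y),x_n)<\epsilon(x_n)$ for every $n\in\mathbb{Z}$. The homeomorphism $f$ satisfies the topological shadowing property if for every $\epsilon\in\mathcal{C}^+$ there exists $\delta\in\mathcal{C}^+$ such that every $\delta$-pseudo-orbit is $\epsilon$-shadowed by an orbit. $\mathbb{R}^d$ carries the Euclidean metric. *)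

(* Defs.v *)
From Stdlib Require Import Reals Lra Lia ZArith Arith.
Open Scope R_scope.

Definition continuous_on_metric {X : Type} (dist : X -> X -> R) (e : X -> R) : Prop :=
  forall x, forall eta, 0 < eta ->
    exists del, 0 < del /\ forall y, dist x y < del -> Rabs (e y - e x) < eta.

Definition Cplus {X : Type} (dist : X -> X -> R) (e : X -> R) : Prop :=
  (forall x, 0 < e x) /\ continuous_on_metric dist e.

Definition Zpow {X : Type} (f finv : X -> X) (n : Z) (y : X) : X :=
  match n with
  | Z0 => y
  | Zpos p => Nat.iter (Pos.to_nat p) f y
  | Zneg p => Nat.iter (Pos.to_nat p) finv y
  end.

Definition pseudo_orbit {X : Type} (dist : X -> X -> R) (f : X -> X)
  (delta : X -> R) (x : Z -> X) : Prop :=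
  forall n : Z, dist (f (x n)) (x (n + 1)%Z) < delta (f (x n)).

Definition eps_shadowed {X : Type} (dist : X -> X -> R) (f finv : X -> X)
  (eps : X -> R) (x : Z -> X) : Prop :=
  exists y : X, forall n : Z, dist (Zpow f finv n y) (x n) < eps (x n).

Definition topological_shadowing {X : Type} (dist : X -> X -> R) (f finv : X -> X) : Prop :=
  forall eps, Cplus dist eps ->
    exists delta, Cplus dist delta /\
      forall x : Z -> X, pseudo_orbit dist f delta x -> eps_shadowed dist f finv eps x.

Definition Rd (d : nat) : Type := {x : nat -> R | forall i, (d <= i)%nat -> x i = 0}.

Definition coord {d : nat} (x : Rd d) (i : nat) : R := proj1_sig x i.

Definition euclid_dist (d : nat) (x y : Rd d) : R :=
  sqrt (sum_f_R0 (fun i => (coord x i - coord y i) ^ 2) (d - 1)).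

(* coordinates of e_1 = (1,0,...,0) (index 0 is the first coordinate) *)
Definition e1f (d i : nat) : R := if andb (Nat.eqb i 0) (Nat.ltb i d) then 1 else 0.

Lemma e1f_out (d i : nat) : (d <= i)%nat -> e1f d i = 0.
Proof.
  intro H; unfold e1f. destruct (Nat.ltb_spec i d); [lia|].
  rewrite Bool.andb_false_r; reflexivity.
Qed.

Definition translate (d : nat) (x : Rd d) : Rd d.
Proof.
  refine (exist _ (fun i => coord x i + e1f d i) _).
  intros i Hi. unfold coord. rewrite (proj2_sig x i Hi), (e1f_out d i Hi). lra.
Defined.

Definition translate_inv (d : nat) (x : Rd d) : Rd d.
Proof.
  refine (exist _ (fun i => coord x i - e1f d i) _).
  intros i Hi. unfold coord. rewrite (proj2_sig x i Hi), (e1f_out d i Hi). lra.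
Defined.

(* Main.v *)
Require Import Defs.
From Stdlib Require Import Reals ZArith Arith Lra Lia.
Open Scope R_scope.

Lemma sum_ge_first (g : nat -> R) (n : nat) :
  (forall i, 0 <= g i) -> g 0%nat <= sum_f_R0 g n.
Proof.
  intro Hg; induction n as [|n IH]; simpl; [lra|]. specialize (Hg (S n)). lra.
Qed.

Lemma sum_only_first (g : nat -> R) (n : nat) :
  (forall i, (1 <= i)%nat -> g i = 0) -> sum_f_R0 g n = g 0%nat.
Proof.
  intro Hg; induction n as [|n IH]; simpl; [lra|]. rewrite IH, (Hg (S n)); [lra|lia].
Qed.

Lemma sqrt_sq_abs (a : R) : sqrt (a ^ 2) = Rabs a.
Proof.
  replace (a ^ 2) with (Rsqr a) by (unfold Rsqr; ring). apply sqrt_Rsqr_abs.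
Qed.

Lemma coord0_le (d : nat) (x y : Rd d) :
  Rabs (coord x 0 - coord y 0) <= euclid_dist d x y.
Proof.
  unfold euclid_dist. rewrite <- sqrt_sq_abs. apply sqrt_le_1_alt.
  apply (sum_ge_first (fun i => (coord x i - coord y i) ^ 2)).
  intro i. apply pow2_ge_0.
Qed.

Lemma dist_only0 (d : nat) (x y : Rd d) :
  (forall i, (1 <= i)%nat -> coord x i = coord y i) ->
  euclid_dist d x y = Rabs (coord x 0 - coord y 0).
Proof.
  intro H. unfold euclid_dist.
  rewrite (sum_only_first (fun i => (coord x i - coord y i) ^ 2)).
  - apply sqrt_sq_abs.
  - intros i Hi. rewrite (H i Hi). ring.
Qed.

Definition pt (d : nat) (t : R) : Rd d.
Proof.
  refine (exist _ (fun i => t * e1f d i) _).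
  intros i Hi. rewrite (e1f_out d i Hi). ring.
Defined.

Lemma e1f_0 (d : nat) : (1 <= d)%nat -> e1f d 0 = 1.
Proof.
  intro H. unfold e1f. simpl. destruct (Nat.ltb_spec 0 d); [reflexivity|lia].
Qed.

Lemma e1f_S (d i : nat) : e1f d (S i) = 0.
Proof. reflexivity. Qed.

Lemma coord_pt0 (d : nat) (t : R) : (1 <= d)%nat -> coord (pt d t) 0 = t.
Proof. intro H. unfold coord, pt; simpl. rewrite e1f_0 by exact H. ring. Qed.

Lemma iter_tr (d k : nat) (y : Rd d) (i : nat) :
  coord (Nat.iter k (translate d) y) i = coord y i + INR k * e1f d i.
Proof.
  induction k as [|k IH]; simpl Nat.iter.
  - simpl. ring.
  - unfold translate at 1. unfold coord at 1. simpl proj1_sig.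
    fold (coord (Nat.iter k (translate d) y) i). rewrite IH, S_INR. ring.
Qed.

Lemma iter_trinv (d k : nat) (y : Rd d) (i : nat) :
  coord (Nat.iter k (translate_inv d) y) i = coord y i - INR k * e1f d i.
Proof.
  induction k as [|k IH]; simpl Nat.iter.
  - simpl. ring.
  - unfold translate_inv at 1. unfold coord at 1. simpl proj1_sig.
    fold (coord (Nat.iter k (translate_inv d) y) i). rewrite IH, S_INR. ring.
Qed.

Lemma zpow_pos (d k : nat) (y : Rd d) : (1 <= d)%nat ->
  coord (Zpow (translate d) (translate_inv d) (Z.of_nat (S k)) y) 0 = coord y 0 + INR (S k).
Proof.
  intro H. change (Z.of_nat (S k)) with (Zpos (Pos.of_succ_nat k)).
  simpl Zpow. rewrite iter_tr, SuccNat2Pos.id_succ, e1f_0 by exact H. ring.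
Qed.

Lemma zpow_neg (d k : nat) (y : Rd d) : (1 <= d)%nat ->
  coord (Zpow (translate d) (translate_inv d) (- Z.of_nat (S k)) y) 0 = coord y 0 - INR (S k).
Proof.
  intro H. change (- Z.of_nat (S k))%Z with (Zneg (Pos.of_succ_nat k)).
  simpl Zpow. rewrite iter_trinv, SuccNat2Pos.id_succ, e1f_0 by exact H. ring.
Qed.

Definition epsf (d : nat) (x : Rd d) : R := / (1 + Rabs (coord x 0)).

Lemma inv_lip (a b : R) :
  Rabs (/ (1 + Rabs b) - / (1 + Rabs a)) <= Rabs (b - a).
Proof.
  pose proof (Rabs_pos a); pose proof (Rabs_pos b).
  replace (/ (1 + Rabs b) - / (1 + Rabs a)) with
    ((Rabs a - Rabs b) * / ((1 + Rabs a) * (1 + Rabs b))) by (field; lra).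
  rewrite Rabs_mult. rewrite (Rabs_right (/ _)).
  2: { apply Rle_ge, Rlt_le, Rinv_0_lt_compat; nra. }
  assert (Hi : / ((1 + Rabs a) * (1 + Rabs b)) <= 1).
  { rewrite <- Rinv_1. apply Rinv_le_contravar; nra. }
  assert (Ht : Rabs (Rabs a - Rabs b) <= Rabs (b - a)).
  { rewrite (Rabs_minus_sym b a). apply Rabs_triang_inv2. }
  pose proof (Rabs_pos (Rabs a - Rabs b)).
  assert (0 <= / ((1 + Rabs a) * (1 + Rabs b))).
  { apply Rlt_le, Rinv_0_lt_compat; nra. }
  nra.
Qed.

Lemma epsf_Cplus (d : nat) : Cplus (euclid_dist d) (epsf d).
Proof.
  split.
  - intro x. unfold epsf. apply Rinv_0_lt_compat. pose proof (Rabs_pos (coord x 0)). lra.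
  - intros x eta Heta. exists eta. split; [exact Heta|].
    intros y Hy. unfold epsf. eapply Rle_lt_trans; [apply inv_lip|].
    pose proof (coord0_le d x y). rewrite Rabs_minus_sym. lra.
Qed.

Lemma dist_tr_pt (d : nat) (a b : R) : (1 <= d)%nat ->
  euclid_dist d (translate d (pt d a)) (pt d b) = Rabs (a + 1 - b).
Proof.
  intro H. rewrite dist_only0.
  - unfold coord; simpl. rewrite e1f_0 by exact H. rewrite !Rmult_1_r. reflexivity.
  - intros i Hi. destruct i as [|j]; [lia|]. unfold coord; simpl. rewrite e1f_S. ring.
Qed.

Lemma nat_big (x : R) : exists k : nat, x < INR (S k).
Proof.
  destruct (archimed x) as [H1 _].
  destruct (Z_le_gt_dec 0 (up x)) as [Hz|Hz].
  - exists (Z.to_nat (up x)). rewrite S_INR, INR_IZR_INZ, Z2Nat.id by exact Hz. lra.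
  - exists 0%nat. simpl. apply Z.gt_lt in Hz. apply IZR_lt in Hz. lra.
Qed.

Theorem mainTheorem10 (d : nat) (hd : (1 <= d)%nat) :
  ~ topological_shadowing (euclid_dist d) (translate d) (translate_inv d).
Proof.
  intro Hsh. destruct (Hsh (epsf d) (epsf_Cplus d)) as [delta [[Hdp _] Hpo]].
  set (s := delta (translate d (pt d 0)) / 2).
  assert (Hs : 0 < s) by (unfold s; specialize (Hdp (translate d (pt d 0))); lra).
  set (xs := fun n : Z => pt d (if (n <=? 0)%Z then IZR n else IZR n + s)).
  assert (Hps : pseudo_orbit (euclid_dist d) (translate d) delta xs).
  { intro n. unfold xs. rewrite dist_tr_pt by exact hd. rewrite plus_IZR.
    destruct (Z.leb_spec n 0) as [H1|H1].
    - destruct (Z.leb_spec (n + 1) 0) as [H2|H2].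
      + replace (IZR n + 1 - (IZR n + 1)) with 0 by ring. rewrite Rabs_R0. apply Hdp.
      + assert (n = 0%Z) by lia. subst n.
        replace (IZR 0 + 1 - (IZR 0 + 1 + s)) with (- s) by ring.
        rewrite Rabs_Ropp, Rabs_right by lra. unfold s. simpl IZR.
        specialize (Hdp (translate d (pt d 0))). lra.
    - destruct (Z.leb_spec (n + 1) 0) as [H2|H2]; [lia|].
      replace (IZR n + s + 1 - (IZR n + 1 + s)) with 0 by ring.
      rewrite Rabs_R0. apply Hdp. }
  destruct (Hpo xs Hps) as [y Hy].
  destruct (nat_big (2 / s)) as [k Hk].
  set (m := INR (S k)) in *.
  assert (Hm : 0 < m) by (unfold m; apply lt_0_INR; lia).
  pose proof (Hy (- Z.of_nat (S k))%Z) as Hneg.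
  pose proof (Hy (Z.of_nat (S k))) as Hpos.
  unfold xs in Hneg, Hpos.
  replace ((- Z.of_nat (S k) <=? 0)%Z) with true in Hneg by (symmetry; apply Z.leb_le; lia).
  replace ((Z.of_nat (S k) <=? 0)%Z) with false in Hpos by (symmetry; apply Z.leb_gt; lia).
  rewrite opp_IZR, <- INR_IZR_INZ in Hneg. rewrite <- INR_IZR_INZ in Hpos.
  fold m in Hneg, Hpos.
  pose proof (coord0_le d (Zpow (translate d) (translate_inv d) (- Z.of_nat (S k)) y) (pt d (- m))) as C1.
  pose proof (coord0_le d (Zpow (translate d) (translate_inv d) (Z.of_nat (S k)) y) (pt d (m + s))) as C2.
  rewrite zpow_neg, coord_pt0 in C1 by exact hd.
  rewrite zpow_pos, coord_pt0 in C2 by exact hd.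
  fold m in C1, C2.
  unfold epsf in Hneg, Hpos. rewrite coord_pt0 in Hneg, Hpos by exact hd.
  rewrite Rabs_Ropp, (Rabs_right m) in Hneg by lra.
  rewrite (Rabs_right (m + s)) in Hpos by lra.
  set (c := coord y 0) in *.
  assert (Hinv : / (1 + (m + s)) <= / (1 + m)).
  { apply Rinv_le_contravar; lra. }
  set (u := / (1 + m)) in *.
  assert (Hu : u * (1 + m) = 1) by (unfold u; field; lra).
  assert (Hu0 : 0 < u) by (unfold u; apply Rinv_0_lt_compat; lra).
  assert (Hms : 2 < m * s).
  { apply (Rmult_lt_compat_r s) in Hk; [|lra]. unfold Rdiv in Hk.
    rewrite Rmult_assoc, Rinv_l in Hk by lra. lra. }
  assert (A1 : Rabs c < u).
  { replace c with (c - m - - m) by ring. lra. }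
  assert (A2 : Rabs (c - s) < u).
  { replace (c - s) with (c + m - (m + s)) by ring. lra. }
  assert (A3 : s <= Rabs c + Rabs (c - s)).
  { replace s with (Rabs (c - (c - s))) at 1.
    - apply Rabs_triang_inv2 || (eapply Rle_trans; [apply Rabs_triang|]; rewrite Rabs_Ropp; lra).
    - replace (c - (c - s)) with s by ring. apply Rabs_right; lra. }
  nra.
Qed.
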